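(* Let $f\in C(\mathbb{R}^2)$ be $\kappa$-Lipschitz and $\mathbb{Z}^2$-periodic; let $v(\tau;c)$ solve $\dot v=f(v,\tau)$, $v(0)=c$, and let $\bar f=\lim_{k\to\infty}v(k;0)/k$. Then for all $\tau>0$ and $c\in\mathbb{R}$, $|v(\tau;c)-(c+\bar f\tau)|\le 1+2\|f\|_\infty$. Moreover, if $f(r,\tau)$ is independent of $\tau$, then $|v(\tau;c)-(c+\bar f\tau)|\le 1$. *)

(* Defs.v *)
From Stdlib Require Import Reals.
From Coquelicot Require Import Coquelicot.
Open Scope R_scope.

Definition lipschitz2 (kappa : R) (f : R -> R -> R) : Prop :=
  forall r t r' t', Rabs (f r t - f r' t') <= kappa * sqrt ((r - r')^2 + (t - t')^2).

Definition Z2_periodic (f : R -> R -> R) : Prop :=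
  forall r t, f (r + 1) t = f r t /\ f r (t + 1) = f r t.

Definition is_flow (f : R -> R -> R) (v : R -> R -> R) : Prop :=
  forall c, v c 0 = c /\ forall tau, is_derive (v c) tau (f (v c tau) tau).

Definition fbar (v : R -> R -> R) : R :=
  real (Lim_seq (fun k : nat => v 0 (INR k) / INR k)).

(* Main.v *)
Require Import Defs.
From Stdlib Require Import Reals Lra Lia.
From Coquelicot Require Import Coquelicot.
Open Scope R_scope.

Lemma is_derive_eq (g : R -> R) x l l' : is_derive g x l -> l = l' -> is_derive g x l'.
Proof. intros H ->; exact H. Qed.

Lemma der_cont (g : R -> R) x l : is_derive g x l -> continuity_pt g x.
Proof.
  intros H. apply continuity_pt_filterlim. apply (ex_derive_continuous g x). exists l; exact H.
Qed.

Lemma decr_of_der (g dg : R -> R) :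
  (forall x, is_derive g x (dg x)) -> (forall x, dg x <= 0) ->
  forall a b, a <= b -> g b <= g a.
Proof.
  intros Hd Hn a b Hab.
  destruct (MVT_gen g a b dg) as [c [_ Hc]].
  - intros x _; apply Hd.
  - intros x _; eapply der_cont; apply Hd.
  - assert (dg c * (b - a) <= 0).
    { assert (0 <= b - a) by lra. specialize (Hn c). nra. }
    lra.
Qed.

Lemma uniq (f : R -> R -> R) (K : R) (K0 : 0 <= K)
  (HK : forall a b t, Rabs (f a t - f b t) <= K * Rabs (a - b))
  (w1 w2 : R -> R)
  (H1 : forall t, is_derive w1 t (f (w1 t) t))
  (H2 : forall t, is_derive w2 t (f (w2 t) t)) t0 :
  w1 t0 = w2 t0 -> forall t, w1 t = w2 t.
Proof.
  intros E t.
  assert (Hdd : forall t, is_derive (fun s => w1 s - w2 s) t (f (w1 t) t - f (w2 t) t)).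
  { intros s. apply (is_derive_minus w1 w2 s); auto. }
  assert (Hk : forall s, -(K * (w1 s - w2 s)^2) <= (w1 s - w2 s) * (f (w1 s) s - f (w2 s) s) <= K * (w1 s - w2 s)^2).
  { intros s. specialize (HK (w1 s) (w2 s) s).
    assert (Rabs ((w1 s - w2 s) * (f (w1 s) s - f (w2 s) s)) <= K * (w1 s - w2 s)^2).
    { rewrite Rabs_mult. replace ((w1 s - w2 s)^2) with (Rabs (w1 s - w2 s) * Rabs (w1 s - w2 s)).
      2:{ rewrite <- Rabs_mult. rewrite Rabs_right. ring. apply Rle_ge; apply Rle_0_sqr. }
      pose proof (Rabs_pos (w1 s - w2 s)). nra. }
    pose proof (Rle_abs ((w1 s - w2 s) * (f (w1 s) s - f (w2 s) s))).
    pose proof (Rle_abs (-((w1 s - w2 s) * (f (w1 s) s - f (w2 s) s)))). rewrite Rabs_Ropp in *. split; lra. }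
  assert (Hsq : (w1 t - w2 t)^2 = 0).
  { destruct (Rle_lt_dec t0 t) as [Hle|Hlt].
    - set (h := fun s => (w1 s - w2 s)^2 * exp (-(2*K) * s)).
      assert (Hh : forall s, is_derive h s
        (2 * ((w1 s - w2 s) * (f (w1 s) s - f (w2 s) s)) * exp (-(2*K)*s)
          - 2*K * (w1 s - w2 s)^2 * exp (-(2*K)*s))).
      { intros s. unfold h. eapply is_derive_eq.
        - apply (is_derive_mult (fun s => (w1 s - w2 s)^2) (fun s => exp (-(2*K)*s))).
          + apply (is_derive_pow (fun s => w1 s - w2 s) 2). apply Hdd.
          + apply (is_derive_comp exp (fun s => -(2*K)*s)). apply is_derive_exp.
            eapply is_derive_eq. apply is_derive_scal. apply is_derive_id. reflexivity.
          + intros; apply Rmult_comm.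
        - unfold plus, mult, scal, one; simpl. unfold mult; simpl; ring. }
      assert (h t <= h t0).
      { apply (decr_of_der h _ Hh); auto. intros s.
        pose proof (exp_pos (-(2*K)*s)). specialize (Hk s).
        assert (0 <= K * (w1 s - w2 s)^2 ) by (apply Rmult_le_pos; [lra| apply pow2_ge_0]).
        nra. }
      unfold h in H. rewrite E in H. replace ((w2 t0 - w2 t0)^2) with 0 in H by ring.
      pose proof (exp_pos (-(2*K)*t)). pose proof (pow2_ge_0 (w1 t - w2 t)). nra.
    - set (h := fun s => (-1) * ((w1 s - w2 s)^2 * exp ((2*K) * s))).
      assert (Hh : forall s, is_derive h s
        (- (2 * ((w1 s - w2 s) * (f (w1 s) s - f (w2 s) s)) * exp ((2*K)*s)
          + 2*K * (w1 s - w2 s)^2 * exp ((2*K)*s)))).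
      { intros s. unfold h. eapply is_derive_eq.
        - apply is_derive_scal.
          apply (is_derive_mult (fun s => (w1 s - w2 s)^2) (fun s => exp ((2*K)*s))).
          + apply (is_derive_pow (fun s => w1 s - w2 s) 2). apply Hdd.
          + apply (is_derive_comp exp (fun s => (2*K)*s)). apply is_derive_exp.
            eapply is_derive_eq. apply is_derive_scal. apply is_derive_id. reflexivity.
          + intros; apply Rmult_comm.
        - unfold opp, plus, mult, scal, one; simpl; unfold mult; simpl. ring. }
      assert (h t0 <= h t).
      { apply (decr_of_der h _ Hh); try lra. intros s.
        pose proof (exp_pos ((2*K)*s)). specialize (Hk s).
        assert (0 <= K * (w1 s - w2 s)^2 ) by (apply Rmult_le_pos; [lra| apply pow2_ge_0]).
        nra. }
      unfold h in H. rewrite E in H. replace ((w2 t0 - w2 t0)^2) with 0 in H by ring.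
      pose proof (exp_pos ((2*K)*t)). pose proof (pow2_ge_0 (w1 t - w2 t)). nra. }
  nra.
Qed.

Lemma cmp (f : R -> R -> R) (K : R) (K0 : 0 <= K)
  (HK : forall a b t, Rabs (f a t - f b t) <= K * Rabs (a - b))
  (w1 w2 : R -> R)
  (H1 : forall t, is_derive w1 t (f (w1 t) t))
  (H2 : forall t, is_derive w2 t (f (w2 t) t)) t0 :
  w1 t0 <= w2 t0 -> forall t, w1 t <= w2 t.
Proof.
  intros E t. destruct (Rle_lt_dec (w1 t) (w2 t)) as [|Hlt]; auto.
  exfalso.
  assert (Hc : continuity (fun s => w1 s - w2 s)).
  { intros s. eapply der_cont. apply (is_derive_minus w1 w2 s); auto. }
  destruct (IVT_gen (fun s => w1 s - w2 s) t0 t 0 Hc) as [x [_ Hx]].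
  { split; [apply Rle_trans with (w1 t0 - w2 t0); [apply Rmin_l| lra]
           | apply Rle_trans with (w1 t - w2 t); [lra| apply Rmax_r]]. }
  assert (w1 x = w2 x) by lra.
  pose proof (uniq f K K0 HK w1 w2 H1 H2 x H t). lra.
Qed.


Lemma vmono f v K (K0 : 0 <= K)
  (HK : forall a b t, Rabs (f a t - f b t) <= K * Rabs (a - b)) (Hv : is_flow f v) :
  forall c1 c2 t, c1 <= c2 -> v c1 t <= v c2 t.
Proof.
  intros c1 c2 t H. apply (cmp f K K0 HK (v c1) (v c2) (fun t => proj2 (Hv c1) t)
    (fun t => proj2 (Hv c2) t) 0).
  rewrite (proj1 (Hv c1)), (proj1 (Hv c2)); auto.
Qed.

Lemma vsh1 f v K (K0 : 0 <= K)
  (HK : forall a b t, Rabs (f a t - f b t) <= K * Rabs (a - b)) (Hv : is_flow f v)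
  (Hp : forall r t, f (r + 1) t = f r t) :
  forall c t, v (c + 1) t = v c t + 1.
Proof.
  intros c t. apply (uniq f K K0 HK (v (c+1)) (fun t => v c t + 1) (fun t => proj2 (Hv (c+1)) t)) with 0.
  - intros s. eapply is_derive_eq. apply (is_derive_plus (v c) (fun _ => 1)).
    apply (proj2 (Hv c)). apply is_derive_const. rewrite Hp. unfold plus, zero; simpl; ring.
  - rewrite (proj1 (Hv c)), (proj1 (Hv (c+1))); auto.
Qed.

Lemma vshN f v K (K0 : 0 <= K)
  (HK : forall a b t, Rabs (f a t - f b t) <= K * Rabs (a - b)) (Hv : is_flow f v)
  (Hp : forall r t, f (r + 1) t = f r t) :
  forall n c t, v (c + INR n) t = v c t + INR n.
Proof.
  induction n; intros c t.
  - simpl. rewrite !Rplus_0_r. auto.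
  - rewrite S_INR. replace (c + (INR n + 1)) with ((c + INR n) + 1) by ring.
    rewrite (vsh1 f v K K0 HK Hv Hp), IHn. ring.
Qed.

Lemma osc f v K (K0 : 0 <= K)
  (HK : forall a b t, Rabs (f a t - f b t) <= K * Rabs (a - b)) (Hv : is_flow f v)
  (Hp : forall r t, f (r + 1) t = f r t) :
  forall t x y, Rabs ((v y t - y) - (v x t - x)) <= 1.
Proof.
  assert (W : forall t x y, x <= y -> Rabs ((v y t - y) - (v x t - x)) <= 1).
  { intros t x y Hxy. destruct (nfloor_ex (y - x)) as [n Hn]; [lra|].
    pose proof (vmono f v K K0 HK Hv (x + INR n) y t ltac:(lra)).
    pose proof (vmono f v K K0 HK Hv y (x + INR (S n)) t ltac:(rewrite S_INR; lra)).
    rewrite !(vshN f v K K0 HK Hv Hp) in *. rewrite S_INR in *.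
    apply Rabs_le; split; lra. }
  intros t x y. destruct (Rle_lt_dec x y). auto.
  rewrite Rabs_minus_sym. apply W; lra.
Qed.

Lemma vtime f v K (K0 : 0 <= K)
  (HK : forall a b t, Rabs (f a t - f b t) <= K * Rabs (a - b)) (Hv : is_flow f v)
  T (HT : forall r t, f r (t + T) = f r t) :
  forall c t, v c (t + T) = v (v c T) t.
Proof.
  intros c t. apply (uniq f K K0 HK (fun t => v c (t + T)) (v (v c T))) with 0.
  - intros s. eapply is_derive_eq. apply (is_derive_comp (v c) (fun s => s + T)).
    apply (proj2 (Hv c)). eapply is_derive_eq. apply (is_derive_plus (fun s => s) (fun _ => T)).
    apply is_derive_id. apply is_derive_const. unfold plus, zero, one; simpl; reflexivity.
    rewrite HT. unfold scal; simpl; unfold mult; simpl; ring.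
  - apply (proj2 (Hv _)).
  - rewrite (proj1 (Hv _)). f_equal. ring.
Qed.

Lemma vtimeK f v K (K0 : 0 <= K)
  (HK : forall a b t, Rabs (f a t - f b t) <= K * Rabs (a - b)) (Hv : is_flow f v)
  T (HT : forall r t, f r (t + T) = f r t) :
  forall k c t, v c (t + INR k * T) = v (v c (INR k * T)) t.
Proof.
  induction k; intros c t.
  - simpl. rewrite Rmult_0_l, Rplus_0_r, (proj1 (Hv c)). auto.
  - rewrite S_INR. replace (t + (INR k + 1) * T) with ((t + T) + INR k * T) by ring.
    rewrite IHk. rewrite (vtime f v K K0 HK Hv T HT).
    replace ((INR k + 1) * T) with (T + INR k * T) by ring. rewrite IHk. auto.
Qed.

Lemma perN (f : R -> R -> R) (Hp : forall r t, f r (t + 1) = f r t) :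
  forall n r t, f r (t + INR n) = f r t.
Proof.
  induction n; intros r t. simpl; rewrite Rplus_0_r; auto.
  rewrite S_INR. replace (t + (INR n + 1)) with ((t + INR n) + 1) by ring. rewrite Hp; auto.
Qed.

Lemma K2 f v K (K0 : 0 <= K)
  (HK : forall a b t, Rabs (f a t - f b t) <= K * Rabs (a - b)) (Hv : is_flow f v)
  (Hp : forall r t, f (r + 1) t = f r t)
  T (HT : forall r t, f r (t + T) = f r t) :
  forall k x, Rabs ((v x (INR k * T) - x) - INR k * (v x T - x)) <= INR k.
Proof.
  induction k; intros x.
  - simpl. rewrite Rmult_0_l, (proj1 (Hv x)). replace (x - x - 0 * (v x T - x)) with 0 by ring.
    rewrite Rabs_R0; lra.
  - pose proof (vtimeK f v K K0 HK Hv T HT k x T) as E.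
    replace (T + INR k * T) with (INR (S k) * T) in E by (rewrite S_INR; ring).
    rewrite E. specialize (IHk x).
    pose proof (osc f v K K0 HK Hv Hp T x (v x (INR k * T))).
    rewrite S_INR in *.
    apply Rabs_le. apply Rabs_le_between in IHk. apply Rabs_le_between in H. split; lra.
Qed.

Lemma Bdd f v K (K0 : 0 <= K)
  (HK : forall a b t, Rabs (f a t - f b t) <= K * Rabs (a - b)) (Hv : is_flow f v)
  (Hp : forall r t, f (r + 1) t = f r t) :
  forall n, exists B, 0 <= B /\ forall r y, (r < n)%nat -> Rabs (v y (INR r) - y) <= B.
Proof.
  induction n.
  - exists 0. split. lra. intros; lia.
  - destruct IHn as [B [HB0 HB]].
    exists (Rmax B (Rabs (v 0 (INR n) - 0) + 1)). split.
    { apply Rle_trans with B; auto; apply Rmax_l. }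
    intros r y Hr. destruct (Nat.eq_dec r n) as [->|Hne].
    + apply Rle_trans with (Rabs (v 0 (INR n) - 0) + 1); [|apply Rmax_r].
      pose proof (osc f v K K0 HK Hv Hp (INR n) 0 y).
      pose proof (Rabs_triang_inv (v y (INR n) - y) (v 0 (INR n) - 0)). lra.
    + apply Rle_trans with B; [apply HB; lia| apply Rmax_l].
Qed.

Lemma est f v K (K0 : 0 <= K)
  (HK : forall a b t, Rabs (f a t - f b t) <= K * Rabs (a - b)) (Hv : is_flow f v)
  (Hp : forall r t, f (r + 1) t = f r t) (Hp1 : forall r t, f r (t + 1) = f r t) :
  forall x n, (0 < n)%nat -> exists C, 0 <= C /\ forall m,
    Rabs ((v x (INR m) - x) - INR m / INR n * (v x (INR n) - x)) <= INR m / INR n + C.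
Proof.
  intros x n Hn. destruct (Bdd f v K K0 HK Hv Hp n) as [B [HB0 HB]].
  set (a := v x (INR n) - x).
  exists (B + Rabs a). split. pose proof (Rabs_pos a); lra.
  intros m.
  pose proof (Nat.div_mod_eq m n) as Hdm. pose proof (Nat.mod_upper_bound m n ltac:(lia)) as Hr.
  set (k := (m / n)%nat) in *. set (r := (m mod n)%nat) in *.
  assert (Hm : INR m = INR r + INR k * INR n).
  { rewrite Hdm at 1. rewrite plus_INR, mult_INR. ring. }
  assert (HnR : 0 < INR n) by (apply lt_0_INR; lia).
  assert (HrR : INR r < INR n) by (apply lt_INR; lia).
  assert (Hr0 : 0 <= INR r) by apply pos_INR.
  assert (Hq : INR m / INR n = INR k + INR r / INR n) by (rewrite Hm; field; apply Rgt_not_eq; exact HnR).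
  assert (Hs0 : 0 <= INR r / INR n) by (apply Rdiv_le_0_compat; lra).
  assert (Hs1 : INR r / INR n <= 1).
  { assert (INR r / INR n * INR n = INR r) by (field; apply Rgt_not_eq; exact HnR). nra. }
  assert (HT : forall r t, f r (t + INR n) = f r t) by (apply perN; auto).
  rewrite Hm. rewrite (vtimeK f v K K0 HK Hv (INR n) HT k x (INR r)).
  set (y := v x (INR k * INR n)).
  pose proof (K2 f v K K0 HK Hv Hp (INR n) HT k x) as H2. fold y in H2. fold a in H2.
  pose proof (HB r y Hr) as H3.
  rewrite <- Hm, Hq.
  replace (v y (INR r) - x - (INR k + INR r / INR n) * a) with
    ((v y (INR r) - y) + (y - x - INR k * a) - (INR r / INR n) * a) by ring.
  assert (Rabs (INR r / INR n * a) <= Rabs a).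
  { rewrite Rabs_mult, (Rabs_right (INR r / INR n)) by lra. pose proof (Rabs_pos a). nra. }
  eapply Rle_trans. apply Rabs_triang. rewrite Rabs_Ropp.
  eapply Rle_trans. apply Rplus_le_compat_r. apply Rabs_triang. lra.
Qed.

Lemma div_bound X Y m e : 0 < m -> Rabs (X - m * Y) <= e -> Rabs (X / m - Y) <= e / m.
Proof.
  intros Hm H. replace (X / m - Y) with ((X - m * Y) / m) by (field; lra).
  unfold Rdiv. rewrite Rabs_mult, (Rabs_right (/ m)).
  apply Rmult_le_compat_r. left; apply Rinv_0_lt_compat; auto. auto.
  left; apply Rinv_0_lt_compat; auto.
Qed.

Lemma lim_ex f v K (K0 : 0 <= K)
  (HK : forall a b t, Rabs (f a t - f b t) <= K * Rabs (a - b)) (Hv : is_flow f v)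
  (Hp : forall r t, f (r + 1) t = f r t) (Hp1 : forall r t, f r (t + 1) = f r t) :
  is_lim_seq (fun m : nat => v 0 (INR m) / INR m) (fbar v).
Proof.
  set (u := fun m : nat => v 0 (INR m) / INR m).
  assert (Hc : ex_lim_seq_cauchy u).
  { intros eps. destruct eps as [eps Heps]; simpl.
    destruct (archimed_cor1 (eps/4)) as [n [Hn Hn0]]; [lra|].
    destruct (est f v K K0 HK Hv Hp Hp1 0 n Hn0) as [C [HC0 HC]].
    destruct (archimed_cor1 (eps/(4*(C+1)))) as [N [HN HN0]].
    { apply Rdiv_lt_0_compat; lra. }
    assert (Hm : forall m, (N <= m)%nat -> Rabs (u m - (v 0 (INR n) - 0) / INR n) < eps / 2).
    { intros m Hm. unfold u.
      assert (HmR : 0 < INR m) by (apply lt_0_INR; lia).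
      assert (HnR : 0 < INR n) by (apply lt_0_INR; lia).
      assert (HNR : 0 < INR N) by (apply lt_0_INR; lia).
      specialize (HC m).
      replace (v 0 (INR m)) with (v 0 (INR m) - 0) by ring.
      pose proof (div_bound (v 0 (INR m) - 0) ((v 0 (INR n) - 0) / INR n) (INR m) (INR m / INR n + C) HmR) as D.
      assert (E : INR m * ((v 0 (INR n) - 0) / INR n) = INR m / INR n * (v 0 (INR n) - 0))
        by (field; lra).
      rewrite E in D. specialize (D HC).
      assert (E2 : (INR m / INR n + C) / INR m = / INR n + C / INR m) by (field; lra).
      rewrite E2 in D.
      assert (C / INR m <= C / INR N).
      { unfold Rdiv. apply Rmult_le_compat_l; auto. apply Rinv_le_contravar; auto.
        apply le_INR; auto. }
      assert (C / INR N < eps / 4).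
      { assert (C / INR N = C * / INR N) by reflexivity.
        assert (C * / INR N <= C * (eps / (4 * (C + 1)))).
        { apply Rmult_le_compat_l; lra. }
        assert (C * (eps / (4 * (C + 1))) < eps / 4).
        { replace (C * (eps / (4 * (C + 1)))) with ((eps / 4) * (C / (C + 1))) by (field; lra).
          assert (C / (C+1) < 1).
          { apply (Rmult_lt_reg_r (C+1)). lra. unfold Rdiv. rewrite Rmult_assoc, Rinv_l; lra. }
          nra. }
        lra. }
      lra. }
    exists N. intros p q Hp' Hq'.
    pose proof (Hm p Hp'). pose proof (Hm q Hq').
    replace (u p - u q) with ((u p - (v 0 (INR n) - 0) / INR n) - (u q - (v 0 (INR n) - 0) / INR n)) by ring.
    eapply Rle_lt_trans. apply Rabs_triang. rewrite Rabs_Ropp. lra. }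
  apply ex_lim_seq_cauchy_corr in Hc. destruct Hc as [l Hl].
  unfold fbar. fold u. rewrite (is_lim_seq_unique _ _ Hl). simpl. exact Hl.
Qed.

Lemma rot f v K (K0 : 0 <= K)
  (HK : forall a b t, Rabs (f a t - f b t) <= K * Rabs (a - b)) (Hv : is_flow f v)
  (Hp : forall r t, f (r + 1) t = f r t) (Hp1 : forall r t, f r (t + 1) = f r t) :
  forall x n, Rabs (v x (INR n) - x - INR n * fbar v) <= 1.
Proof.
  intros x n. set (l := fbar v).
  destruct n as [|n']. 
  { simpl. rewrite (proj1 (Hv x)). replace (x - x - 0 * l) with 0 by ring. rewrite Rabs_R0; lra. }
  set (n := S n').
  assert (HnR : 0 < INR n) by (apply lt_0_INR; lia).
  apply Rle_plus_epsilon. intros eps Heps.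
  pose proof (lim_ex f v K K0 HK Hv Hp Hp1) as HL. apply is_lim_seq_spec in HL.
  destruct (HL (mkposreal (eps / (2 * INR n)) ltac:(apply Rdiv_lt_0_compat; lra))) as [N HN].
  simpl in HN. fold l in HN.
  destruct (archimed_cor1 (eps/2)) as [k0 [Hk0 Hk00]]; [lra|].
  set (k := (k0 + N)%nat).
  assert (Hk0R : 0 < INR k0) by (apply lt_0_INR; lia).
  assert (HkR : INR k0 <= INR k) by (apply le_INR; lia).
  assert (HT : forall r t, f r (t + INR n) = f r t) by (apply perN; auto).
  pose proof (K2 f v K K0 HK Hv Hp (INR n) HT k x) as H1.
  set (a := v x (INR n) - x) in *.
  rewrite <- mult_INR in H1.
  pose proof (osc f v K K0 HK Hv Hp (INR (k * n)) x 0) as H2.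
  assert (HmN : (N <= k * n)%nat) by (unfold k, n; nia).
  specialize (HN _ HmN).
  assert (HmR : 0 < INR (k * n)) by (apply lt_0_INR; unfold k, n; nia).
  assert (H3 : Rabs (v 0 (INR (k * n)) - INR (k*n) * l) <= INR (k * n) * (eps / (2 * INR n))).
  { replace (v 0 (INR (k * n)) - INR (k*n) * l) with (INR (k*n) * (v 0 (INR (k * n)) / INR (k * n) - l))
      by (field; lra).
    rewrite Rabs_mult, Rabs_right by lra. apply Rmult_le_compat_l. lra. left; exact HN. }
  rewrite mult_INR in H3.
  replace (INR k * INR n * (eps / (2 * INR n))) with (INR k * (eps / 2)) in H3 by (field; lra).
  rewrite mult_INR in H1, H2.
  apply Rabs_le_between in H1. apply Rabs_le_between in H2. apply Rabs_le_between in H3.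
  assert (Hkey : Rabs (INR k * (a - INR n * l)) <= INR k + 1 + INR k * (eps / 2)).
  { apply Rabs_le. split; lra. }
  rewrite Rabs_mult, Rabs_right in Hkey by lra.
  assert (INR k * (1 + eps) >= INR k + 1 + INR k * (eps / 2)).
  { assert (INR k * / INR k0 >= 1).
    { replace 1 with (INR k0 * / INR k0) by (field; lra).
      apply Rle_ge, Rmult_le_compat_r; [left; apply Rinv_0_lt_compat; lra| lra]. }
    nra. }
  assert (INR k * Rabs (a - INR n * l) <= INR k * (1 + eps)) by lra.
  apply Rmult_le_reg_l in H0; lra.
Qed.

Lemma mvt_bound f v (Hv : is_flow f v) M (HM : forall r t, Rabs (f r t) <= M) :
  forall y s, 0 <= s -> Rabs (v y s - y) <= M * s.
Proof.
  intros y s Hs.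
  destruct (MVT_gen (v y) 0 s (fun t => f (v y t) t)) as [c [_ Hc]].
  - intros; apply (proj2 (Hv y)).
  - intros; eapply der_cont; apply (proj2 (Hv y)).
  - rewrite (proj1 (Hv y)) in Hc. rewrite Hc, Rabs_mult, Rminus_0_r, (Rabs_right s) by lra.
    apply Rmult_le_compat_r; auto.
Qed.

Lemma arch_le X D : 0 <= D -> (forall k : nat, (0 < k)%nat -> X <= 1 + D / INR k) -> X <= 1.
Proof.
  intros HD H. apply Rle_plus_epsilon. intros eps Heps.
  destruct (archimed_cor1 (eps / (D + 1))) as [k [Hk Hk0]].
  { apply Rdiv_lt_0_compat; lra. }
  specialize (H k Hk0).
  assert (HkR : 0 < INR k) by (apply lt_0_INR; lia).
  assert (D / INR k <= eps).
  { assert (D / INR k = D * / INR k) by reflexivity.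
    assert (D * / INR k <= D * (eps / (D+1))) by (apply Rmult_le_compat_l; lra).
    assert (D * (eps / (D+1)) <= eps).
    { replace (D * (eps / (D+1))) with (eps * (D / (D+1))) by (field; lra).
      assert (D / (D+1) <= 1).
      { apply (Rmult_le_reg_r (D+1)). lra. unfold Rdiv. rewrite Rmult_assoc, Rinv_l; lra. }
      nra. }
    lra. }
  lra.
Qed.

Lemma part1 f v K (K0 : 0 <= K)
  (HK : forall a b t, Rabs (f a t - f b t) <= K * Rabs (a - b)) (Hv : is_flow f v)
  (Hp : forall r t, f (r + 1) t = f r t) (Hp1 : forall r t, f r (t + 1) = f r t)
  M (HM : forall r t, Rabs (f r t) <= M) :
  forall tau c, 0 < tau -> Rabs (v c tau - (c + fbar v * tau)) <= 1 + 2 * M.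
Proof.
  intros tau c Htau. set (l := fbar v).
  assert (HM0 : 0 <= M) by (apply Rle_trans with (Rabs (f 0 0)); auto; apply Rabs_pos).
  assert (Hl : Rabs l <= M).
  { assert (Rabs l - M + 1 <= 1).
    { apply (arch_le _ 1); [lra|]. intros k Hk.
      assert (HkR : 0 < INR k) by (apply lt_0_INR; lia).
      pose proof (rot f v K K0 HK Hv Hp Hp1 0 k) as H1. fold l in H1.
      pose proof (mvt_bound f v Hv M HM 0 (INR k) (pos_INR k)) as H2.
      assert (H3 : INR k * Rabs l <= M * INR k + 1).
      { assert (E : Rabs (INR k * l) = INR k * Rabs l) by (rewrite Rabs_mult, Rabs_right; lra).
        rewrite <- E.
        pose proof (Rabs_triang (v 0 (INR k) - 0) (-(v 0 (INR k) - 0 - INR k * l))) as H.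
        rewrite Rabs_Ropp in H.
        replace (v 0 (INR k) - 0 + - (v 0 (INR k) - 0 - INR k * l)) with (INR k * l) in H by ring.
        lra. }
      assert (H4 : Rabs l <= M + 1 / INR k).
      { apply (Rmult_le_reg_l (INR k)); [lra|].
        replace (INR k * (M + 1 / INR k)) with (M * INR k + 1) by (field; lra). lra. }
      lra. }
    lra. }
  destruct (nfloor_ex tau) as [n [Hn1 Hn2]]; [lra|].
  set (s := tau - INR n).
  assert (HT : forall r t, f r (t + 1) = f r t) by auto.
  pose proof (vtimeK f v K K0 HK Hv 1 HT n c s) as E. rewrite Rmult_1_r in E.
  replace (s + INR n) with tau in E by (unfold s; ring).
  rewrite E. set (y := v c (INR n)).
  pose proof (mvt_bound f v Hv M HM y s ltac:(unfold s; lra)) as H1.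
  pose proof (rot f v K K0 HK Hv Hp Hp1 c n) as H2. fold l y in H2.
  assert (Hls : Rabs (l * s) <= M) by (rewrite Rabs_mult, (Rabs_right s) by (unfold s; lra);
    assert (s <= 1) by (unfold s; lra); pose proof (Rabs_pos l); nra).
  replace (v y s - (c + l * tau)) with ((v y s - y) + (y - c - INR n * l) - l * s) by (unfold s; ring).
  eapply Rle_trans. apply Rabs_triang. rewrite Rabs_Ropp.
  eapply Rle_trans. apply Rplus_le_compat_r. apply Rabs_triang.
  assert (M * s <= M) by (assert (s <= 1) by (unfold s; lra); unfold s in *; nra).
  lra.
Qed.

Lemma part2 f v K (K0 : 0 <= K)
  (HK : forall a b t, Rabs (f a t - f b t) <= K * Rabs (a - b)) (Hv : is_flow f v)
  (Hp : forall r t, f (r + 1) t = f r t) (Hp1 : forall r t, f r (t + 1) = f r t)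
  (Hau : forall r t t', f r t = f r t') :
  forall tau c, 0 < tau -> Rabs (v c tau - (c + fbar v * tau)) <= 1.
Proof.
  intros tau c Htau. set (l := fbar v).
  assert (Hc0 : forall s, 0 <= s <= 1 -> continuity_pt (v 0) s).
  { intros s _. eapply der_cont. apply (proj2 (Hv 0)). }
  destruct (continuity_ab_maj (v 0) 0 1 ltac:(lra) Hc0) as [smax [Hmax _]].
  destruct (continuity_ab_min (v 0) 0 1 ltac:(lra) Hc0) as [smin [Hmin _]].
  set (B := Rabs (v 0 smax) + Rabs (v 0 smin) + 1).
  assert (HB : forall y s, 0 <= s <= 1 -> Rabs (v y s - y) <= B).
  { intros y s Hs. pose proof (osc f v K K0 HK Hv Hp s 0 y) as H.
    specialize (Hmax s Hs). specialize (Hmin s Hs).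
    pose proof (Rle_abs (v 0 smax)). pose proof (Rle_abs (- v 0 smin)). rewrite Rabs_Ropp in *.
    apply Rabs_le_between in H. unfold B. pose proof (Rabs_pos (v 0 smax)). pose proof (Rabs_pos (v 0 smin)). apply Rabs_le. split; lra. }
  set (D := B + Rabs l + 1).
  assert (HD : forall x t, 0 <= t -> Rabs (v x t - x - l * t) <= D).
  { intros x t Ht. destruct (nfloor_ex t Ht) as [n [Hn1 Hn2]].
    set (s := t - INR n).
    assert (HT : forall r t, f r (t + 1) = f r t) by auto.
    pose proof (vtimeK f v K K0 HK Hv 1 HT n x s) as E. rewrite Rmult_1_r in E.
    replace (s + INR n) with t in E by (unfold s; ring).
    rewrite E. set (y := v x (INR n)).
    pose proof (HB y s ltac:(unfold s; lra)) as H1.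
    pose proof (rot f v K K0 HK Hv Hp Hp1 x n) as H2. fold l y in H2.
    assert (Hls : Rabs (l * s) <= Rabs l) by (rewrite Rabs_mult, (Rabs_right s) by (unfold s; lra);
      assert (s <= 1) by (unfold s; lra); pose proof (Rabs_pos l); nra).
    replace (v y s - x - l * t) with ((v y s - y) + (y - x - INR n * l) - l * s) by (unfold s; ring).
    eapply Rle_trans. apply Rabs_triang. rewrite Rabs_Ropp.
    eapply Rle_trans. apply Rplus_le_compat_r. apply Rabs_triang. unfold D. lra. }
  assert (HD0 : 0 <= D) by (unfold D, B; pose proof (Rabs_pos l);
     pose proof (Rabs_pos (v 0 smax)); pose proof (Rabs_pos (v 0 smin)); lra).
  assert (HT : forall r t, f r (t + tau) = f r t) by (intros; apply Hau).
  set (a := v c tau - c).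
  replace (v c tau - (c + l * tau)) with (a - l * tau) by (unfold a; ring).
  apply (arch_le _ D HD0). intros k Hk.
  assert (HkR : 0 < INR k) by (apply lt_0_INR; lia).
  pose proof (K2 f v K K0 HK Hv Hp tau HT k c) as H1. fold a in H1.
  pose proof (HD c (INR k * tau) ltac:(pose proof (pos_INR k); nra)) as H2.
  assert (Hkey : Rabs (INR k * (a - l * tau)) <= INR k + D).
  { replace (INR k * (a - l * tau)) with
      (-(v c (INR k * tau) - c - INR k * a) + (v c (INR k * tau) - c - l * (INR k * tau))) by ring.
    eapply Rle_trans. apply Rabs_triang. rewrite Rabs_Ropp. lra. }
  rewrite Rabs_mult, Rabs_right in Hkey by lra.
  apply (Rmult_le_reg_l (INR k)); [lra|].
  replace (INR k * (1 + D / INR k)) with (INR k + D) by (field; lra). lra.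
Qed.

Theorem lemma2p4 (f : R -> R -> R) (kappa : R) (v : R -> R -> R)
  (Hcont : forall r t, continuity_2d_pt f r t)
  (Hlip : lipschitz2 kappa f)
  (Hper : Z2_periodic f)
  (Hv : is_flow f v) :
  (forall M : R, (forall r t, Rabs (f r t) <= M) ->
     forall tau c, 0 < tau -> Rabs (v c tau - (c + fbar v * tau)) <= 1 + 2 * M)
  /\ ((forall r t t', f r t = f r t') ->
     forall tau c, 0 < tau -> Rabs (v c tau - (c + fbar v * tau)) <= 1).
Proof.
  assert (K0 : 0 <= Rabs kappa) by apply Rabs_pos.
  assert (HK : forall a b t, Rabs (f a t - f b t) <= Rabs kappa * Rabs (a - b)).
  { intros a b t. specialize (Hlip a t b t).
    replace ((a - b)^2 + (t - t)^2) with (Rsqr (a - b)) in Hlip by (unfold Rsqr; ring).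
    rewrite sqrt_Rsqr_abs in Hlip.
    pose proof (Rle_abs kappa). pose proof (Rabs_pos (a - b)). nra. }
  assert (Hp : forall r t, f (r + 1) t = f r t) by (intros; apply Hper).
  assert (Hp1 : forall r t, f r (t + 1) = f r t) by (intros; apply Hper).
  split.
  - intros M HM. apply (part1 f v (Rabs kappa) K0 HK Hv Hp Hp1 M HM).
  - intros Hau. apply (part2 f v (Rabs kappa) K0 HK Hv Hp Hp1 Hau).
Qed.
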